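(* Let $p \geq 3$ be a prime and let $B > 1$ be a real number. Write $p-1 = p_1^{e_1} p_2^{e_2} \cdots p_h^{e_h}\, Q$, where $p_1 = 2 < p_2 < \cdots < p_h$ are the distinct primes less than $B$ dividing $p-1$, $e_i \geq 1$ is the exact power of $p_i$ dividing $p-1$, and $Q$ is a positive integer having no prime factor less than $B$. Assume $Q > 1$. For each $1 \leq i \leq h$ let $\alpha_i \in (\mathbb{Z}/p\mathbb{Z})^*$ satisfy $\alpha_i^{(p-1)/p_i} \not\equiv 1 \pmod p$, and set $a \equiv \prod_{i=1}^h \alpha_i^{(p-1)/p_i^{e_i}} \pmod p$. Let $S = \{ b \in (\mathbb{Z}/p\mathbb{Z})^* : b^{(p-1)/Q} \not\equiv 1 \pmod p\}$, and for $b \in S$ let $g_b \equiv a\, b^{(p-1)/Q} \pmod p$. Then the number of $b \in S$ for which $g_b$ is a primitive root modulo $p$ (i.e. a generator of $(\mathbb{Z}/p\mathbb{Z})^*$) is at least $\frac{\varphi(Q)}{Q-1}\,|S|$. Equivalently, if $b$ is chosen uniformly at random from $S$, then $g_b$ is a primitive root modulo $p$ with probability at least $\frac{\varphi(Q)}{Q-1}$.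
   Context: $\varphi$ denotes Euler's totient function. This describes the output of the paper's ''Probabilistic Primitive Root'' algorithm in the case where the factorization of $p-1$ into primes below $B$ does not fully factor $p-1$: the algorithm returns $g_b = a b^{(p-1)/Q}$ for a randomly chosen $b$ with $b^{(p-1)/Q} \not\equiv 1 \pmod p$. *)

(* Defs.v *)
From mathcomp Require Import all_boot all_order all_algebra.
From mathcomp Require Import reals.
Set Implicit Arguments. Unset Strict Implicit. Unset Printing Implicit Defensive.

Definition small_primes (R : realType) (B : R) (n : nat) : seq nat :=
  [seq q <- primes n | (q%:R < B)%R].

(* Main.v *)
Require Import Defs.
From mathcomp Require Import all_boot all_order all_algebra.
From mathcomp Require Import reals.
From mathcomp Require Import all_solvable all_field.
From mathcomp Require Import ring.
Import Order.TTheory GRing.Theory Num.Theory.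
Local Open Scope ring_scope.

Lemma card_ord_pred n (P : pred nat) :
  #|[set k : 'I_n | P k]| = (\sum_(0 <= k < n) P k)%N.
Proof.
rewrite -sum1_card big_mkcond /= big_mkord.
by apply: eq_bigr => i _; rewrite inE; case: (P i).
Qed.

Lemma sum_periodic (P : pred nat) Q M : (forall k, P (k + Q)%N = P k) ->
  (\sum_(0 <= k < M * Q) P k = M * \sum_(0 <= k < Q) P k)%N.
Proof.
move=> hper; elim: M => [|M IH]; first by rewrite mul0n big_geq.
rewrite mulSn (@big_cat_nat _ _ _ Q) //= ?leq_addr // -{2}(add0n Q) big_addn addKn.
rewrite (@eq_bigr _ _ _ _ _ _ (fun i => nat_of_bool (P (i + Q)%N)) (fun i => nat_of_bool (P i))); last by move=> i _; rewrite hper.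
by rewrite IH mulSn.
Qed.

Section Exps.
Variables (F : fieldType) (n : nat) (z : F).
Hypothesis hz : n.-primitive_root z.

Lemma coprime_one (x : F) q u : x ^+ n = 1 -> x ^+ q = 1 -> x ^+ u = 1 ->
  coprime q u -> x = 1.
Proof.
move=> /(prim_rootP hz) [d ->] hq hu cqu.
have : (n %| gcdn (d * q) (d * u))%N.
  by rewrite dvdn_gcd !(prim_order_dvd hz) !exprM hq hu eqxx.
rewrite -muln_gcdr (eqP cqu) muln1 (prim_order_dvd hz) => /eqP //.
Qed.

End Exps.

Theorem theorem1 (R : realType) (p : nat) (B : R) (Q : nat)
    (alpha : nat -> 'F_p)
    (hp : prime p) (hp3 : (3 <= p)%N) (hB : 1 < B)
    (hQpos : (0 < Q)%N)
    (hQsmooth : forall q : nat, prime q -> (q %| Q)%N -> ~ (q%:R < B))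
    (hdec : p.-1 = (\prod_(q <- small_primes B p.-1) q ^ logn q p.-1 * Q)%N)
    (hQ1 : (1 < Q)%N)
    (halpha : forall q : nat, q \in small_primes B p.-1 ->
       alpha q != 0 /\ alpha q ^+ (p.-1 %/ q) != 1) :
  let a : 'F_p := \prod_(q <- small_primes B p.-1)
                    alpha q ^+ (p.-1 %/ q ^ logn q p.-1) in
  let S := [set b : 'F_p | (b != 0) && (b ^+ (p.-1 %/ Q) != 1)] in
  let g := fun b : 'F_p => a * b ^+ (p.-1 %/ Q) in
  (totient Q)%:R / (Q.-1)%:R * (#|S|%:R : R)
    <= (#|[set b in S | (p.-1).-primitive_root (g b)]|%:R : R).
Proof.
set n := p.-1 in halpha hdec *.
set L := small_primes B n in halpha hdec *.
cbv zeta.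
set a := \prod_(q <- L) _.
set S := [set b : 'F_p | (b != 0) && (b ^+ (n %/ Q) != 1)].
set M := (\prod_(q <- L) q ^ logn q n)%N in hdec.
have n_gt0 : (0 < n)%N by rewrite /n; case: (p) hp3 => // [[|[|]]].
have hnMQ : n = (M * Q)%N := hdec.
have M_gt0 : (0 < M)%N by move: n_gt0; rewrite hnMQ muln_gt0 => /andP[].
have hnQ : (n %/ Q)%N = M by rewrite hnMQ mulnK.
have hcardF : #|'F_p| = n.+1 by rewrite card_Fp // /n prednK // prime_gt0.
have fermat : forall x : 'F_p, x != 0 -> x ^+ n = 1.
  move=> x x0; apply: (mulIf x0); rewrite mul1r -exprSr -hcardF expf_card //.
have [z hz] : exists z : 'F_p, n.-primitive_root z.
  have := @has_prim_root _ n (enum (predC1 (0 : 'F_p))) n_gt0.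
  case/(_ _ _ _)/hasP.
  - apply/allP => x; rewrite mem_enum inE => x0.
    by rewrite unity_rootE fermat.
  - exact: enum_uniq.
  - by rewrite -cardE cardC1 hcardF.
  by move=> x _ hx; exists x.
have hLuniq : uniq L by rewrite filter_uniq // primes_uniq.
have hLp : forall q, q \in L -> [/\ prime q, (q %| n)%N & q%:R < B].
  move=> q; rewrite mem_filter mem_primes => /andP[hB' /and3P[]] //.
have hcopMQ : coprime M Q.
  rewrite /M big_seq; apply: (big_ind (fun x => coprime x Q)); first exact: coprime1n.
  - by move=> x y; rewrite coprimeMl => -> ->.
  move=> q /hLp [qp qn qB]; apply: coprimeXl; rewrite prime_coprime //.
  by apply/negP => /(hQsmooth _ qp).
have hqeM : forall q, q \in L -> (q ^ logn q n %| M)%N.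
  by move=> q qL; rewrite /M (big_rem q) //= dvdn_mulr.
have hMn : (M %| n)%N by rewrite hnMQ dvdn_mulr.
have hprM : forall r, prime r -> (r %| M)%N -> r \in L.
  move=> r rp; rewrite /M Euclid_dvd_prod // big_has => /hasP [q qL].
  have [qp _ _] := hLp q qL.
  by rewrite Euclid_dvdX // dvdn_prime2 // => /andP[/eqP -> _].
have haM : a ^+ M = 1.
  rewrite /a -prodrXl big_seq big1 // => q qL.
  have [qnz _] := halpha q qL.
  have [s ->] := dvdnP (hqeM q qL).
  rewrite -exprM mulnCA divnK ?pfactor_dvdnn // mulnC exprM fermat // expr1n //.
have haMr : forall r, prime r -> (r %| M)%N -> a ^+ (M %/ r) != 1.
  move=> q qp /[dup] qM /(hprM _ qp) qL.
  have [_ qn qB] := hLp q qL.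
  rewrite /a -prodrXl (big_rem q) //= big_seq big1 ?mulr1; last first.
    move=> q' q'L.
    move: (q'L); rewrite mem_rem_uniq // inE => /andP[q'q {}q'L].
    have [q'p _ _] := hLp q' q'L.
    have cq : coprime (q' ^ logn q' n) q.
      by apply: coprimeXl; rewrite prime_coprime // dvdn_prime2.
    have : (q' ^ logn q' n * q %| M)%N by rewrite Gauss_dvd // hqeM.
    case/dvdnP => t ->.
    have [qnz _] := halpha q' q'L.
    rewrite -exprM mulnA mulnK ?prime_gt0 // mulnCA divnK ?pfactor_dvdnn //.
    by rewrite mulnC exprM fermat // expr1n.
  have [qnz qne] := halpha q qL.
  have : (0 < logn q n)%N by rewrite logn_gt0 mem_primes qp n_gt0.
  case E : (logn q n) => [//|e] _.
  have [s' cqs hns] := pfactor_coprime qp n_gt0.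
  rewrite E in hns.
  have [u hMu] := dvdnP (hqeM q qL); rewrite E in hMu.
  have us : (u %| s')%N.
    by move: hMn; rewrite hMu {1}hns dvdn_pmul2r // expn_gt0 prime_gt0.
  have cqu : coprime q u by apply: coprime_dvdr us cqs.
  rewrite -exprM.
  have -> : (n %/ q ^ e.+1 * (M %/ q) = (n %/ q) * u)%N.
    rewrite hMu hns mulnK ?expn_gt0 ?prime_gt0 // expnSr !mulnA.
    rewrite !mulnK ?prime_gt0 //.
    by rewrite mulnA [RHS]mulnAC.
  rewrite exprM; apply: contra qne => /eqP hu; apply/eqP.
  apply: (@coprime_one _ n z hz (alpha q ^+ (n %/ q)) q u _ _ _ cqu).
  - by rewrite -exprM mulnC exprM fermat // expr1n.
  - by rewrite -exprM divnK // fermat.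
  - exact: hu.
have han : a ^+ n = 1 by rewrite hnMQ exprM haM expr1n.
have [[A _] /= hA] := prim_rootP hz han.
have hQA : (Q %| A)%N.
  move: haM; rewrite hA -exprM => /eqP; rewrite -(prim_order_dvd hz) hnMQ.
  by rewrite [(A * M)%N]mulnC dvdn_pmul2l.
have hAM : coprime A M.
  apply/negPn/negP => ncop.
  have g_gt1 : (1 < gcdn A M)%N.
    by rewrite ltn_neqAle eq_sym ncop gcdn_gt0 M_gt0 orbT.
  set r := pdiv (gcdn A M).
  have rp : prime r := pdiv_prime g_gt1.
  have rg : (r %| gcdn A M)%N := pdiv_dvd _.
  move: rg; rewrite dvdn_gcd => /andP[rA rM].
  have crQ : coprime r Q by apply: coprime_dvdl rM hcopMQ.
  have : (r * Q %| A)%N by rewrite Gauss_dvd // rA hQA.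
  case/dvdnP => t htA.
  case/dvdnP: rM => s hsM.
  have rM : (r %| M)%N by rewrite hsM dvdn_mull.
  move: (haMr r rp rM).
  rewrite hA -exprM -(prim_order_dvd hz) hnMQ hsM mulnK ?prime_gt0 // htA.
  move/negP; apply.
  by apply/dvdnP; exists t; ring.
have z0 : z != 0.
  apply/eqP => z0; move: (prim_expr_order hz); rewrite z0 expr0n gtn_eqF //.
have hzk0 : forall k : nat, z ^+ k != 0 by move=> k; apply: expf_neq0.
have hpow : forall k : nat, ((z ^+ k) ^+ M == 1) = (Q %| k)%N.
  move=> k; rewrite -exprM -(prim_order_dvd hz) hnMQ [(k * M)%N]mulnC.
  by rewrite dvdn_pmul2l.
have [t htQ] := dvdnP hQA.
rewrite htQ in hAM hA.
have hprim : forall k : nat, n.-primitive_root (a * (z ^+ k) ^+ M) = coprime k Q.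
  move=> k; rewrite hA -exprM -exprD prim_root_exp_coprime // hnMQ coprimeMr.
  have -> : coprime (t * Q + k * M) M.
    by rewrite coprime_sym /coprime addnC gcdnMDl -/(coprime M (t * Q)) coprime_sym.
  rewrite /= coprime_sym /coprime gcdnMDl -/(coprime Q (k * M)) coprimeMr.
  by rewrite -/(coprime k Q) (coprime_sym Q M) hcopMQ andbT coprime_sym.
pose f := fun k : 'I_n => z ^+ k.
have f_inj : injective f.
  move=> i j /eqP; rewrite /f (eq_prim_root_expr hz) !modn_small //.
  by move=> /eqP /val_inj.
have hlog : forall b : 'F_p, b != 0 -> exists k : 'I_n, b = z ^+ k.
  by move=> b b0; have [k ->] := prim_rootP hz (fermat b b0); exists k.
have hS : S = f @: [set k : 'I_n | ~~ (Q %| k)%N].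
  apply/setP => b; rewrite !inE hnQ; apply/andP/imsetP.
    case=> b0 hb; have [k hk] := hlog b b0; exists k => //.
    by rewrite inE -hpow -hk.
  by case=> k; rewrite inE => hk ->; split; [exact: hzk0 | rewrite /f hpow].
have hT : [set b in S | n.-primitive_root (a * b ^+ (n %/ Q))]
    = f @: [set k : 'I_n | coprime k Q].
  apply/setP => b; rewrite !inE hnQ; apply/idP/imsetP.
    case/andP => /andP[b0 hb] hprimb; have [k hk] := hlog b b0; exists k => //.
    by rewrite inE -hprim -hk.
  case=> k; rewrite inE => hk ->; rewrite /f hzk0 hpow hprim hk /= andbT.
  apply/negP => /coprime_dvdl /(_ hk); rewrite /coprime gcdnn => /eqP Q1.
  by rewrite Q1 in hQ1.
have cS : #|S| = (M * Q.-1)%N.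
  rewrite hS card_imset // (card_ord_pred n (fun k => ~~ (Q %| k)%N)) hnMQ.
  rewrite (sum_periodic (fun k => ~~ (Q %| k)%N)).
    congr (_ * _)%N; rewrite big_ltn // dvdn0 /= add0n.
    rewrite (@eq_big_nat _ _ _ 1 Q _ (fun _ => 1%N)) ?sum_nat_const_nat ?muln1 ?subn1 //.
    move=> i /andP[i1 iQ]; case: (boolP (Q %| i)%N) => // /(dvdn_leq i1).
    by rewrite leqNgt iQ.
  by move=> k; rewrite dvdn_addl.
have cT : #|[set b in S | n.-primitive_root (a * b ^+ (n %/ Q))]| = (M * totient Q)%N.
  rewrite hT card_imset // (card_ord_pred n (fun k => coprime k Q)) hnMQ.
  rewrite (sum_periodic (fun k => coprime k Q)).
    congr (_ * _)%N; rewrite totient_count_coprime.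
    by apply: eq_bigr => i _; rewrite coprime_sym.
  by move=> k; rewrite /coprime gcdnC gcdnDr gcdnC.
rewrite cS cT !natrM.
have Q0 : (Q.-1)%:R != 0 :> R by rewrite pnatr_eq0 -lt0n -subn1 subn_gt0.
rewrite [X in _ * X]mulrC mulrA divfK // mulrC //.
Qed.
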